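(* Let $M, K, P, N$ be positive integers with $K \le P$. Let $\mathbf{A} \in \mathbb{R}^{M \times N}$ be any matrix such that each column has at least one nonzero entry. Let $\mathbf{F} \in \mathbb{R}^{P \times N}$ be any matrix such that for every set $\chi \subseteq \{1,\ldots,P\}$ with $|\chi| = K$, the span of the rows of $\mathbf{F}$ indexed by $\chi$ contains the span of the $M$ rows of $\mathbf{A}$. Then the average sparsity $\bar{s}$ over the rows of $\mathbf{F}$ satisfies $$\bar{s} \ge \frac{N}{P}\,(P - K + 1).$$
   Context: The sparsity of a vector is its number of nonzero entries; $\bar{s} = \frac{1}{P}\sum_{i=1}^P \|\mathbf{f}_i\|_0$, where $\mathbf{f}_i^T$ is the $i$-th row of $\mathbf{F}$ and $\|\cdot\|_0$ counts nonzero entries. *)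

(* Defs.v *)
From mathcomp Require Import all_boot all_order all_algebra.
Set Implicit Arguments. Unset Strict Implicit. Unset Printing Implicit Defensive.
Import Order.TTheory GRing.Theory Num.Theory.
Local Open Scope ring_scope.

Definition row_sparsity (R : ringType) (P N : nat) (F : 'M[R]_(P, N)) (i : 'I_P) : nat :=
  #|[set j : 'I_N | F i j != 0]|.

Definition avg_sparsity (R : fieldType) (P N : nat) (F : 'M[R]_(P, N)) : R :=
  (\sum_(i < P) row_sparsity F i)%:R / P%:R.

Definition rows_of (R : ringType) (P N : nat) (F : 'M[R]_(P, N)) (chi : {set 'I_P})
  : 'M[R]_(#|chi|, N) :=
  \matrix_(i < #|chi|, j < N) F (enum_val i) j.

(* Main.v *)
Require Import Defs.
From mathcomp Require Import all_boot all_order all_algebra.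
From mathcomp Require Import zify.
Import Order.TTheory GRing.Theory Num.Theory.
Local Open Scope ring_scope.

Lemma col_count (R : realFieldType) (M K P N : nat)
  (hK : (0 < K)%N) (hKP : (K <= P)%N)
  (A : 'M[R]_(M, N)) (F : 'M[R]_(P, N))
  (hA : forall j : 'I_N, exists i : 'I_M, A i j != 0)
  (hF : forall chi : {set 'I_P}, #|chi| = K -> (A <= rows_of F chi)%MS)
  (j : 'I_N) : (P - K + 1 <= #|[set i : 'I_P | F i j != 0%R]|)%N.
Proof.
rewrite leqNgt; apply/negP => hlt.
set Z := [set i : 'I_P | F i j == 0].
have hZ : (K <= #|Z|)%N.
  have := cardsC [set i : 'I_P | F i j != 0].
  have -> : ~: [set i : 'I_P | F i j != 0] = Z.
    by apply/setP => i; rewrite !inE negbK.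
  rewrite card_ord => e; lia.
set s := take K (enum Z).
have us : uniq s by rewrite take_uniq // enum_uniq.
have ss : size s = K by rewrite size_take -cardE; case: ltnP => // h; lia.
set chi := [set x in s].
have cchi : #|chi| = K by rewrite cardsE; move/card_uniqP: us => ->.
have sub : forall x, x \in chi -> F x j = 0.
  move=> x; rewrite inE => /mem_take; rewrite mem_enum inE => /eqP //.
have [D hD] := submxP (hF chi cchi).
have [i hi] := hA j.
move/negP: hi; apply; apply/eqP.
rewrite hD !mxE big1 // => k _.
rewrite mxE sub ?mulr0 //.
exact: enum_valP.
Qed.

Theorem theorem2 (R : realFieldType) (M K P N : nat)
  (hM : (0 < M)%N) (hK : (0 < K)%N) (hP : (0 < P)%N) (hN : (0 < N)%N)
  (hKP : (K <= P)%N)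
  (A : 'M[R]_(M, N)) (F : 'M[R]_(P, N))
  (hA : forall j : 'I_N, exists i : 'I_M, A i j != 0)
  (hF : forall chi : {set 'I_P}, #|chi| = K -> (A <= rows_of F chi)%MS) :
  avg_sparsity F >= (N%:R / P%:R) * (P - K + 1)%:R.
Proof.
have hsum : (N * (P - K + 1) <= \sum_(i < P) row_sparsity F i)%N.
  have -> : (\sum_(i < P) row_sparsity F i
     = \sum_(j < N) #|[set i : 'I_P | F i j != 0%R]|)%N.
    rewrite /row_sparsity.
    under eq_bigr => i _ do rewrite -sum1_card big_mkcond /=.
    rewrite exchange_big /=; apply: eq_bigr => j _.
    by rewrite -[RHS]sum1_card [RHS]big_mkcond /=; apply: eq_bigr => i _; rewrite !inE.
  rewrite -[X in (X * _ <= _)%N](card_ord N) -sum_nat_const.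
  by apply: leq_sum => j _; exact: (@col_count R M K P N hK hKP A F hA hF j).
rewrite /avg_sparsity mulrAC -natrM.
rewrite ler_wpM2r // ?invr_ge0 ?ler0n // ler_nat.
exact: hsum.
Qed.
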